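(* Consider Generalized FTPL with a $(\kappa,\delta)$-admissible translation matrix $\Gamma\in[0,1]^{|\mathcal X|\times N}$, accuracy $\epsilon\ge0$, and a $\big(\rho,\frac{1+2\epsilon}{\delta}\big)$-dispersed distribution $D$. Then \[ \mathbb{E}\Big[\sum_{t=1}^T f(x_{t+1},y_t)-f(x_t,y_t)\Big]\le 2TN\kappa\rho . \]
   Context: Online learning setting: $\mathcal X$ finite set of learner actions, $\mathcal Y$ set of adversary actions, $f:\mathcal X\times\mathcal Y\to[0,1]$; adversary sequence $y_1,\dots,y_T$ fixed in advance. Generalized FTPL with parameters $(\Gamma,D,\epsilon)$: draw $\alpha_1,\dots,\alpha_N$ i.i.d. from $D$ once; for each $t=1,\dots,T+1$, $x_t$ is any action (a function of $\vec\alpha$ and $y_1,\dots,y_{t-1}$) with $\sum_{\tau<t}f(x_t,y_\tau)+\vec\alpha\cdot\Gamma_{x_t}\ge\sum_{\tau<t}f(x,y_\tau)+\vec\alpha\cdot\Gamma_x-\epsilon$ for all $x\in\mathcal X$; here $\Gamma_x$ is the row of $\Gamma$ indexed by $x$. A matrix $\Gamma$ is admissible if its rows are pairwise distinct; it is $(\kappa,\delta)$-admissible if it is admissible, each column contains at most $\kappa$ distinct values, and any two distinct values in the same column differ by at least $\delta$. A distribution $D$ on $\mathbb R$ is $(\rho,L)$-dispersed if every interval of length $L$ has $D$-probability at most $\rho$. *)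

(* Defs.v *)
From HB Require Import structures.
From mathcomp Require Import all_boot all_order all_algebra.
From mathcomp Require Import all_classical all_reals all_analysis.
Set Implicit Arguments. Unset Strict Implicit. Unset Printing Implicit Defensive.
Import Order.TTheory GRing.Theory Num.Theory.
Local Open Scope classical_set_scope.
Local Open Scope ring_scope.

(* Gamma : X -> 'I_N -> R, Gamma x is the row of the matrix indexed by x. *)

Definition admissible (R : realType) (X : finType) (N : nat)
  (Gamma : X -> 'I_N -> R) : Prop :=
  forall x x' : X, (forall j, Gamma x j = Gamma x' j) -> x = x'.

Definition kd_admissible (R : realType) (X : finType) (N : nat)
  (Gamma : X -> 'I_N -> R) (kappa : nat) (delta : R) : Prop :=
  [/\ admissible Gamma,
      (forall j : 'I_N, (size (undup [seq Gamma x j | x <- enum X]) <= kappa)%N)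
    & (forall (j : 'I_N) (x x' : X), Gamma x j != Gamma x' j ->
          delta <= `|Gamma x j - Gamma x' j|)].

(* (rho, L)-dispersed distribution on R: every interval of length L has
   probability at most rho (closed intervals [a, a+L] are the largest ones). *)
Definition dispersed (R : realType) (D : probability R R) (rho L : R) : Prop :=
  forall a : R, (D `[a, (a + L)%R]%classic <= rho%:E)%E.

Definition iid_law (R : realType) (N : nat) (D : probability R R)
  (P : probability (N.-tuple R) R) : Prop :=
  forall A : 'I_N -> set R, (forall i, measurable (A i)) ->
    P [set a : N.-tuple R | forall i, A i (tnth a i)] = (\prod_(i < N) D (A i))%E.

Definition pert (R : realType) (X : finType) (N : nat)
  (Gamma : X -> 'I_N -> R) (a : N.-tuple R) (x : X) : R :=
  \sum_(j < N) tnth a j * Gamma x j.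

(* sel t a = x_t (for t = 1..T+1) is a valid run of Generalized FTPL with
   parameters (Gamma, D, eps) against the sequence y (y_1, ..., y_T). *)
Definition gftpl_run (R : realType) (Y : Type) (N T : nat)
  (X' : finType) (f : X' -> Y -> R) (Gamma : X' -> 'I_N -> R) (eps : R)
  (y : nat -> Y) (sel : nat -> N.-tuple R -> X') : Prop :=
  forall (t : nat), (1 <= t <= T.+1)%N -> forall (a : N.-tuple R) (x : X'),
    \sum_(1 <= tau < t) f x (y tau) + pert Gamma a x - eps <=
    \sum_(1 <= tau < t) f (sel t a) (y tau) + pert Gamma a (sel t a).

(* Main.v *)
Require Import Defs.
From HB Require Import structures.
From mathcomp Require Import all_boot all_order all_algebra.
From mathcomp Require Import all_classical all_reals all_analysis.
From mathcomp Require Import ring lra measurable_realfun.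
Import Order.TTheory GRing.Theory Num.Theory.
Local Open Scope classical_set_scope.
Local Open Scope ring_scope.
Set Implicit Arguments. Unset Strict Implicit. Unset Printing Implicit Defensive.

Section Key.
Context (R : realType) (N : nat) (j : 'I_N).

Definition phi (p : N.-tuple R * R) : N.-tuple R :=
  [tuple (if i == j then p.2 else tnth p.1 i) | i < N].

Lemma tnth_phi p i : tnth (phi p) i = if i == j then p.2 else tnth p.1 i.
Proof. by rewrite tnth_mktuple. Qed.

Lemma measurable_phi : measurable_fun setT phi.
Proof.
apply/measurable_fun_tnthP => i.
rewrite (_ : _ \o _ = fun p => if i == j then p.2 else tnth p.1 i); last first.
  by apply: funext => p /=; rewrite tnth_phi.
case: (i == j); first exact: measurable_snd.
exact: (measurableT_comp (f := fun t : N.-tuple R => tnth t i) (g := fst) (measurable_tnth i) measurable_fst).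
Qed.
End Key.

Definition rect (R : realType) (N : nat) (A : 'I_N -> set R) : set (N.-tuple R) :=
  [set a | forall i, A i (tnth a i)].

Definition rects (R : realType) (N : nat) : set (set (N.-tuple R)) :=
  [set S | exists A : 'I_N -> set R, (forall i, measurable (A i)) /\ S = rect A].

Lemma rect_measurable (R : realType) (N : nat) (A : 'I_N -> set R) :
  (forall i, measurable (A i)) -> measurable (rect A).
Proof.
move=> mA.
have -> : rect A = \bigcap_(i in setT) ((fun a : N.-tuple R => tnth a i) @^-1` A i).
  by apply/seteqP; split => [a Ha i _|a Ha i] //=; exact: Ha.
apply: fin_bigcap_measurable; first exact: finite_finset.
move=> i _.
by rewrite -[X in measurable X]setTI; exact: measurable_tnth.
Qed.

Lemma rects_gen (R : realType) (N : nat) :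
  (measurable : set (set (N.-tuple R))) = <<s @rects R N >>.
Proof.
apply/seteqP; split; last first.
  apply: smallest_sub; first exact: sigma_algebra_measurable.
  by move=> _ [A [mA ->]]; exact: rect_measurable.
apply: smallest_sub; first exact: smallest_sigma_algebra.
case: N => [|n]; first by rewrite big_ord0.
rewrite -bigcup_mkord_ord => X [i Ii [Y mY <-]].
apply: sub_sigma_algebra.
exists (fun k => if k == inord i then Y else setT); split.
  by move=> k; case: ifP.
apply/seteqP; split => [a [_ Ha] k|a Ha]; first by case: ifP => [/eqP -> //|//].
by split => //; have := Ha (inord i); rewrite eqxx.
Qed.
Section Uniq.
Context (R : realType) (N : nat) (j : 'I_N) (D : probability R R)
  (P : probability (N.-tuple R) R).
Local Open Scope ereal_scope.
Hypothesis iid : iid_law D P.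

Lemma phi_rect (A : 'I_N -> set R) :
  @phi R N j @^-1` rect A =
  rect (fun k => if k == j then setT else A k) `*` A j.
Proof.
apply/seteqP; split => [[a b] /= H|[a b] [/= H1 H2] i].
  split => [i|] /=; last by have := H j; rewrite tnth_phi eqxx.
  by case: ifP => // /negbT ij; have := H i; rewrite tnth_phi (negbTE ij).
rewrite tnth_phi; case: ifP => [/eqP -> //|ij].
by have := H1 i; rewrite ij.
Qed.

Lemma P_phi (S : set (N.-tuple R)) : measurable S ->
  P S = (P \x D) (@phi R N j @^-1` S).
Proof.
move=> mS.
apply: (measure_unique (@rects R N) (fun _ => setT) (rects_gen R N) _ _ _ P
  (pushforward (P \x D) (@phi R N j))) => //.
- move=> _ _ [A [mA ->]] [B [mB ->]]; exists (fun k => A k `&` B k); split.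
    by move=> k; exact: measurableI.
  by apply/seteqP; split => [a [H1 H2] k|a H]; [split|split => k; have [] := H k].
- by move=> _; exists (fun _ => setT); split => //; apply/seteqP; split.
- by apply/seteqP; split => // x _; exists 0%N.
- exact: measurable_phi.
- move=> mf _ [A [mA ->]]; change (P (rect A) = (P \x D) (@phi R N j @^-1` rect A)).
  rewrite phi_rect product_measure1E; last 2 first.
  + by apply: rect_measurable => k; case: ifP.
  + exact: mA.
  have mA' : forall k, measurable ((fun k => if k == j then setT else A k) k).
    by move=> k; case: ifP.
  have e1 : P (rect A) = \prod_(i < N) D (A i) := iid mA.
  have e2 : P (rect (fun k => if k == j then setT else A k)) =
    \prod_(i < N) D (if i == j then setT else A i) := iid mA'.
  change (P (rect A) = P (rect (fun k => if k == j then setT else A k)) * D (A j)).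
  rewrite e1 e2 (bigD1 j)//= [in RHS](bigD1 j)//= eqxx.
  have -> : D [set: R] = 1 by exact: probability_setT.
  rewrite mul1e muleC; congr (_ * _); apply: eq_bigr => k /negbTE -> //.
- by move=> _; apply: (le_lt_trans (probability_le1 _ _)) => //; exact: ltry.
Qed.

Lemma keyP (rho L : R) (S : set (N.-tuple R)) :
  dispersed D rho L -> measurable S ->
  (forall a b1 b2, S (@phi R N j (a, b1)) -> S (@phi R N j (a, b2)) -> (b2 - b1 <= L)%R) ->
  P S <= rho%:E.
Proof.
move=> disp mS diam.
have rho0 : (0 <= rho)%R.
  by rewrite -lee_fin; apply: le_trans (disp 0%R); exact: measure_ge0.
have mA : measurable (@phi R N j @^-1` S).
  by rewrite -[X in measurable X]setTI; exact: measurable_phi.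
rewrite P_phi //.
rewrite /product_measure1.
apply: (@le_trans _ _ (\int[P]_x (cst rho%:E) x)).
  apply: ge0_le_integral => //.
    exact: measurable_fun_xsection.
  move=> x _ /=.
  rewrite xsectionE.
  set E := (fun y => (x, y)) @^-1` _.
  have mE : measurable E by rewrite /E -xsectionE; exact: measurable_xsection.
  have [->|/set0P [b0 Eb0]] := eqVneq E set0.
    by rewrite measure0 lee_fin.
  have lbE : lbound E (b0 - L)%R.
    by move=> b Eb; have := diam x b b0 Eb Eb0; rewrite lerBlDr addrC -lerBlDr.
  have sub : E `<=` `[inf E, (inf E + L)%R]%classic.
    move=> b Eb /=; rewrite in_itv /=; apply/andP; split.
      by apply: ge_inf => //; exists (b0 - L)%R.
    rewrite -lerBlDr; apply: lb_le_inf; first by exists b0.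
    by move=> b' Eb'; have := diam x b' b Eb' Eb; rewrite lerBlDr addrC -lerBlDr.
  apply: le_trans (disp (inf E)).
  apply: le_measure => //; rewrite inE //; exact: measurable_itv.
rewrite integral_cst //.
rewrite -[leRHS]mule1 lee_pmul // ?lee_fin //.
exact: probability_le1.
Qed.
End Uniq.

Lemma pert_phi (R : realType) (X : finType) (N : nat) (Gamma : X -> 'I_N -> R)
  (j : 'I_N) a b x :
  pert Gamma (@phi R N j (a, b)) x =
  \sum_(i < N | i != j) tnth a i * Gamma x i + b * Gamma x j.
Proof.
rewrite /pert (bigD1 j) //= tnth_phi eqxx addrC; congr (_ + _).
by apply: eq_bigr => i /negbTE ij; rewrite tnth_phi ij.
Qed.

Lemma core (R : realType) (Y : Type) (N T : nat) (X : finType)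
  (f : X -> Y -> R) (Gamma : X -> 'I_N -> R) (eps : R) (y : nat -> Y)
  (sel : nat -> N.-tuple R -> X) (j : 'I_N) t a b1 b2 :
  (forall x z, 0 <= f x z <= 1) ->
  @gftpl_run R Y N T X f Gamma eps y sel -> (1 <= t <= T)%N ->
  (b2 - b1) * (Gamma (sel t.+1 (@phi R N j (a, b1))) j
                - Gamma (sel t (@phi R N j (a, b2))) j) <= 1 + 2 * eps.
Proof.
move=> f01 run /andP [t1 tT].
set a1 := phi j (a, b1); set a2 := phi j (a, b2).
set x2 := sel t a2; set z1 := sel t.+1 a1.
have h1 := run t ltac:(by rewrite t1 /= ltnW // ltnS) a2 z1.
have h2 := run t.+1 ltac:(by rewrite ltnS) a1 x2.
rewrite !big_nat_recr //= in h2.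
rewrite /a1 /a2 !pert_phi in h1 h2.
have := f01 x2 (y t); have := f01 z1 (y t).
move: h1 h2.
set Sx := \sum_(1 <= tau < t) f x2 (y tau).
set Sz := \sum_(1 <= tau < t) f z1 (y tau).
set Cx := \sum_(i < N | i != j) _ * Gamma x2 i.
set Cz := \sum_(i < N | i != j) _ * Gamma z1 i.
move=> h1 h2 /andP [fz0 fz1] /andP [fx0 fx1].
lra.
Qed.

Lemma meas_sel2 (R : realType) (N : nat) (X : finType) (sel : nat -> N.-tuple R -> X)
  (msel : forall t (x : X), measurable [set a : N.-tuple R | sel t a = x])
  (Q : X -> X -> Prop) t s :
  measurable [set a : N.-tuple R | Q (sel t a) (sel s a)].
Proof.
have -> : [set a : N.-tuple R | Q (sel t a) (sel s a)] =
  \bigcup_(p in [set p : X * X | Q p.1 p.2])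
     ([set a | sel t a = p.1] `&` [set a | sel s a = p.2]).
  apply/seteqP; split => [a Ha|a [p Hp [/= -> ->]]] //.
  by exists (sel t a, sel s a).
apply: fin_bigcup_measurable; first exact: finite_finset.
by move=> p _; apply: measurableI.
Qed.

Lemma meas_fun_sel2 (R : realType) (N : nat) (X : finType) (sel : nat -> N.-tuple R -> X)
  (msel : forall t (x : X), measurable [set a : N.-tuple R | sel t a = x])
  (h : X -> X -> R) t s :
  measurable_fun setT (fun a => h (sel t a) (sel s a)).
Proof.
move=> _ B mB; rewrite setTI.
exact: (meas_sel2 msel (fun x z => B (h x z))).
Qed.

Lemma int_sum_le d (T : measurableType d) (R : realType)
  (mu : {measure set T -> \bar R}) (I : eqType) (s : seq I)
  (h : I -> T -> R) (c : I -> \bar R) :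
  (forall i, measurable_fun setT (h i)) -> (forall i x, 0 <= h i x) ->
  (forall i, i \in s -> (\int[mu]_x (h i x)%:E <= c i)%E) ->
  (\int[mu]_x (\sum_(i <- s) h i x)%:E <= \sum_(i <- s) c i)%E.
Proof.
move=> mh h0 hc.
under eq_integral do rewrite -sumEFin.
rewrite ge0_integral_sum //; last first.
  by move=> i x _; rewrite lee_fin.
  by move=> i; apply/measurable_EFinP.
by rewrite big_seq_cond [leRHS]big_seq_cond; apply: lee_sum => i /andP [/hc].
Qed.

Unset Implicit Arguments.

Theorem lemma2p2 (R : realType) (X : finType) (Y : Type) (N T : nat)
  (f : X -> Y -> R) (Gamma : X -> 'I_N -> R)
  (kappa : nat) (delta eps rho : R)
  (D : probability R R) (P : probability (N.-tuple R) R)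
  (y : nat -> Y) (sel : nat -> N.-tuple R -> X) :
  (forall x z, 0 <= f x z <= 1) ->
  (forall x j, 0 <= Gamma x j <= 1) ->
  0 < delta ->
  kd_admissible Gamma kappa delta ->
  0 <= eps ->
  dispersed D rho ((1 + 2 * eps) / delta) ->
  iid_law D P ->
  (forall t (x : X), measurable [set a : N.-tuple R | sel t a = x]) ->
  @gftpl_run R Y N T X f Gamma eps y sel ->
  (\int[P]_a (\sum_(1 <= t < T.+1) (f (sel t.+1 a) (y t) - f (sel t a) (y t)))%:E
     <= (2 * T%:R * N%:R * kappa%:R * rho)%:E)%E.
Proof.
move=> f01 G01 d0 [adm kap sep] e0 disp iid msel run.
have rho0 : 0 <= rho.
  by rewrite -lee_fin; apply: le_trans (disp 0); exact: measure_ge0.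
pose vals (j : 'I_N) := undup [seq Gamma x j | x <- enum X].
pose Ep t j v := [set a : N.-tuple R | Gamma (sel t a) j = v /\ v < Gamma (sel t.+1 a) j].
pose Em t j v := [set a : N.-tuple R | Gamma (sel t a) j = v /\ Gamma (sel t.+1 a) j < v].
have mEp t j v : measurable (Ep t j v).
  exact: (meas_sel2 msel (fun x z => Gamma x j = v /\ v < Gamma z j)).
have mEm t j v : measurable (Em t j v).
  exact: (meas_sel2 msel (fun x z => Gamma x j = v /\ Gamma z j < v)).
have divL (b : R) (w : R) : delta <= w -> b * w <= 1 + 2 * eps ->
    b <= (1 + 2 * eps) / delta.
  move=> dw h; rewrite ler_pdivlMr //.
  have [hb|hb] := leP 0 b.
    by apply: le_trans h; rewrite ler_wpM2l.
  have : b * delta <= 0 by rewrite pmulr_lle0 // ltW.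
  lra.
have PEp t j v : (1 <= t <= T)%N -> (P (Ep t j v) <= rho%:E)%E.
  move=> tT; apply: (keyP (j := j) iid disp (mEp t j v)) => a b1 b2 [_ lt1] [e2 _].
  have := core j a b1 b2 f01 run tT; rewrite e2 => h.
  apply: divL h.
  have := sep j (sel t.+1 (phi j (a, b1))) (sel t (phi j (a, b2))).
  rewrite e2 (gt_eqF lt1).
  by move=> /(_ isT); rewrite gtr0_norm // subr_gt0.
have PEm t j v : (1 <= t <= T)%N -> (P (Em t j v) <= rho%:E)%E.
  move=> tT; apply: (keyP (j := j) iid disp (mEm t j v)) => a b1 b2 [e1 _] [_ lt2].
  have := core j a b2 b1 f01 run tT; rewrite e1 => h.
  apply: (divL _ (v - Gamma (sel t.+1 (phi j (a, b2))) j)); last first.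
    by rewrite -mulrNN !opprB.
  have := sep j (sel t.+1 (phi j (a, b2))) (sel t (phi j (a, b1))).
  rewrite e1 (lt_eqF lt2) => /(_ isT); by rewrite ltr0_norm ?subr_lt0 // opprB.
pose F a := \sum_(1 <= t < T.+1) (f (sel t.+1 a) (y t) - f (sel t a) (y t)).
pose g t a := \sum_(j < N) \sum_(v <- vals j)
   ((\1_(Ep t j v) a : R) + (\1_(Em t j v) a : R)).
pose G a := \sum_(1 <= t < T.+1) g t a.
have g0 t a : 0 <= g t a.
  apply: sumr_ge0 => j _; apply: sumr_ge0 => v _.
  by apply: addr_ge0; rewrite indicE.
have mg t : measurable_fun setT (g t).
  apply: measurable_sum => j; apply: measurable_sum => v.
  by apply: measurable_funD; apply: measurable_indic.
have mF : measurable_fun setT F.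
  apply: measurable_sum => t.
  exact: (meas_fun_sel2 msel (fun z x => f z (y t) - f x (y t))).
have pw a : F a <= G a.
  apply: ler_sum => t _.
  have [fz0 fz1] := andP (f01 (sel t.+1 a) (y t)).
  have [fx0 fx1] := andP (f01 (sel t a) (y t)).
  have [exz|nxz] := eqVneq (sel t a) (sel t.+1 a).
    by rewrite exz subrr; apply: sumr_ge0 => j _; apply: sumr_ge0 => v _;
       apply: addr_ge0; rewrite indicE.
  have [j hj] : exists j, Gamma (sel t a) j != Gamma (sel t.+1 a) j.
    apply: contrapT => nj; move/eqP: nxz; apply; apply: adm => k.
    by apply/eqP/negPn/negP => hk; apply: nj; exists k.
  have vin : Gamma (sel t a) j \in vals j.
    by rewrite mem_undup; apply/mapP; exists (sel t a) => //; rewrite mem_enum.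
  rewrite /g (bigD1 j) //= (bigD1_seq (Gamma (sel t a) j)) ?undup_uniq //=.
  have -> : (\1_(Ep t j (Gamma (sel t a) j)) a : R) +
            (\1_(Em t j (Gamma (sel t a) j)) a : R) = 1.
    rewrite !indicE; case: (ltgtP (Gamma (sel t a) j) (Gamma (sel t.+1 a) j)) => h.
    - have H1 : Ep t j (Gamma (sel t a) j) a by [].
      have H2 : ~ Em t j (Gamma (sel t a) j) a.
        by move=> [_ /ltW]; rewrite leNgt h.
      by rewrite (mem_set H1) (memNset H2) addr0.
    - have H1 : Em t j (Gamma (sel t a) j) a by [].
      have H2 : ~ Ep t j (Gamma (sel t a) j) a.
        by move=> [_ /ltW]; rewrite leNgt h.
      by rewrite (mem_set H1) (memNset H2) add0r.
    - by move: hj; rewrite h eqxx.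
  have r1 : 0 <= \sum_(i <- vals j | i != Gamma (sel t a) j)
      ((\1_(Ep t j i) a : R) + (\1_(Em t j i) a : R)).
    by apply: sumr_ge0 => v _; apply: addr_ge0; rewrite indicE.
  have r2 : 0 <= \sum_(i < N | i != j) \sum_(v <- vals i)
      ((\1_(Ep t i v) a : R) + (\1_(Em t i v) a : R)).
    by apply: sumr_ge0 => i _; apply: sumr_ge0 => v _; apply: addr_ge0; rewrite indicE.
  lra.
have mGE : measurable_fun setT (fun a => (G a)%:E).
  by apply/measurable_EFinP; apply: measurable_sum.
apply: (@le_trans _ _ (\int[P]_a (G a)%:E)%E).
  rewrite integralE.
  apply: le_trans (leeB (lexx _) (_ : (0 <= _)%E)) _.
    by apply: integral_ge0 => a _; exact: funeneg_ge0.
  rewrite sube0; apply: ge0_le_integral => //.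
  - by apply: measurable_funepos; apply/measurable_EFinP.
  - move=> a _; rewrite funeposE /= ge_max lee_fin pw lee_fin.
    by apply: sumr_ge0 => t _.
have bound : (\int[P]_a (G a)%:E <=
    \sum_(1 <= t < T.+1) \sum_(j < N) \sum_(v <- vals j) (rho + rho)%:E)%E.
  apply: int_sum_le => // t; rewrite mem_index_iota => tT.
  have tT' : (1 <= t <= T)%N by rewrite -ltnS.
  apply: int_sum_le.
  - by move=> j; apply: measurable_sum => v; apply: measurable_funD;
       apply: measurable_indic.
  - by move=> j x; apply: sumr_ge0 => v _; apply: addr_ge0; rewrite indicE.
  move=> j _; apply: int_sum_le.
  - by move=> v; apply: measurable_funD; apply: measurable_indic.
  - by move=> v x; apply: addr_ge0; rewrite indicE.
  move=> v _.
  under eq_integral do rewrite EFinD.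
  rewrite ge0_integralD //; last 2 first.
  - by apply/measurable_EFinP; apply: measurable_indic.
  - by apply/measurable_EFinP; apply: measurable_indic.
  rewrite !integral_indic // !setIT EFinD.
  by apply: leeD; [exact: PEp|exact: PEm].
apply: le_trans bound _.
have h1 j : (\sum_(v <- vals j) (rho + rho)%:E <= (kappa%:R * (rho + rho))%:E)%E.
  rewrite sumEFin lee_fin big_const_seq count_predT iter_addr_0 -mulr_natl.
  rewrite -[X in X <= _]mulr_natl.
  apply: ler_wpM2r; first lra.
  by rewrite mulr1 ler_nat; exact: kap.
apply: le_trans.
  by apply: lee_sum => t _; apply: lee_sum => j _; exact: h1.
rewrite sumEFin sumEFin lee_fin sumr_const card_ord sumr_const_nat subn1 /=.
rewrite -mulrnA -[_ *+ (N * T)%N]mulr_natr natrM le_eqVlt; apply/orP; left; apply/eqP; ring.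
Qed.
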